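(* Let $A$ be a generator of a maximal split torus $T\subset\mathrm{SL}(V)$, with eigenvalues $\xi,\xi^{-1}\in\mathbb{F}$, and let $\{\mathbf{e}_1,\mathbf{e}_2\}$ be a symplectic basis of $(V,S)$ with $A\mathbf{e}_1=\xi\mathbf{e}_1$ and $A\mathbf{e}_2=\xi^{-1}\mathbf{e}_2$. Define: - $B_+(\mathbf{u},\mathbf{v})=S(\mathbf{u},\mathbf{e}_1)S(\mathbf{v},\mathbf{e}_2)$; - $g_0(\mathbf{u},\mathbf{v})=2\,\mathrm{Tr}\,B_+(\mathbf{u},\mathbf{v})\in\mathbb{Z}_4$; - $g(\mathbf{u},\mathbf{v})=h\big(B_+(\mathbf{u}+\mathbf{v},\mathbf{u}+\mathbf{v})^{1/2}\big)-h\big(B_+(\mathbf{u},\mathbf{u})^{1/2}\big)-h\big(B_+(\mathbf{v},\mathbf{v})^{1/2}\big)+g_0(\mathbf{u},\mathbf{v})\in\mathbb{Z}_4$. Then $m=i^{g}$ is a $T$-invariant Weyl multiplier for $(V,S)$, and $m(\alpha_1\mathbf{e}_1,\alpha_2\mathbf{e}_2)=i^{h((\alpha_1\alpha_2)^{1/2})}$ for all $\alpha_1,\alpha_2\in\mathbb{F}$.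
   Context: $\mathbb{F}$ is a finite field with $|\mathbb{F}|=2^n$, $\mathrm{Tr}:\mathbb{F}\to\mathbb{Z}_2$ is the field trace, and $\alpha^{1/2}:=\alpha^{|\mathbb{F}|/2}$ is the inverse of squaring. $V$ is a $2$-dimensional $\mathbb{F}$-space, and $S$ is a symplectic form (nonzero bilinear with $S(\mathbf{v},\mathbf{v})=0$). A symplectic basis is a basis with $S(\mathbf{e}_1,\mathbf{e}_2)=1$. A Weyl multiplier for $(V,S)$ is a unit-modulus function $m$ on $V\times V$ with the following properties: - the cocycle identity $m(\mathbf{u}+\mathbf{v},\mathbf{w})m(\mathbf{u},\mathbf{v})=m(\mathbf{u},\mathbf{v}+\mathbf{w})m(\mathbf{v},\mathbf{w})$ holds; - $m(\mathbf{d}_1,\mathbf{d}_2)=1$ for $\mathbf{d}_1,\mathbf{d}_2$ in a common $1$-dimensional subspace; - $\overline{m(\mathbf{u},\mathbf{v})}m(\mathbf{v},\mathbf{u})=(-1)^{\mathrm{Tr}\,S(\mathbf{u},\mathbf{v})}$. $m$ is $T$-invariant if $m(B\mathbf{u},B\mathbf{v})=m(\mathbf{u},\mathbf{v})$ for all $B\in T$. A maximal split torus is a cyclic subgroup of $\mathrm{SL}(V)$ of order $|\mathbb{F}|-1$ generated by an element with two distinct eigenvalues in $\mathbb{F}$. Fix a basis $\omega_1,\dots,\omega_n$ of $\mathbb{F}$ over $\mathbb{Z}_2$ with $\mathrm{Tr}(\omega_i\omega_j)=\delta_{ij}$; such a basis exists. Fix signs $r_1,\dots,r_n\in\{\pm1\}$,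 and define $h:\mathbb{F}\to\mathbb{Z}_4$ by $h(\sum_i z_i\omega_i)=\sum_i r_i z_i^2$ for $z_i\in\mathbb{Z}_2$, where $z\mapsto z^2$ maps $\mathbb{Z}_2\to\mathbb{Z}_4$ ($0\mapsto0$, $1\mapsto1$). The map $2\cdot:\mathbb{Z}_2\to\mathbb{Z}_4$ sends $z\mapsto 2z$, and $i$ is the imaginary unit. *)

(* Defs.v *)
From HB Require Import structures.
From mathcomp Require Import all_boot all_order all_algebra all_fingroup all_field.
Set Implicit Arguments. Unset Strict Implicit. Unset Printing Implicit Defensive.
Import GRing.Theory Num.Theory.
Local Open Scope ring_scope.

(* Field trace of F (|F| = 2^n) over Z_2, as an element of F (it lies in {0,1}). *)
Definition trF (F : finFieldType) (n : nat) (x : F) : F := \sum_(k < n) x ^+ (2 ^ k).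

(* The trace as an element of Z_2 = bool (true <-> Tr x = 1). *)
Definition trb (F : finFieldType) (n : nat) (x : F) : bool := trF n x == 1.

Definition sqrtF (F : finFieldType) (x : F) : F := x ^+ (#|F| %/ 2).

(* V is modeled as the column space F^2; linear maps act by left matrix product. *)
Notation V F := 'cV[F]_2.

Definition symplectic_form (F : finFieldType) (S : V F -> V F -> F) : Prop :=
  [/\ (forall (a : F) (u v w : V F), S (a *: u + v) w = a * S u w + S v w),
      (forall (a : F) (u v w : V F), S u (a *: v + w) = a * S u v + S u w),
      (forall v : V F, S v v = 0)
    & exists u v : V F, S u v != 0].

Definition weyl_multiplier (F : finFieldType) (n : nat) (S : V F -> V F -> F)
    (m : V F -> V F -> algC) : Prop :=
  [/\ (forall u v : V F, `|m u v| = 1),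
      (forall u v w : V F, m (u + v) w * m u v = m u (v + w) * m v w),
      (forall d1 d2 : V F,
          (exists d : V F, d != 0 /\ exists a1 a2 : F, d1 = a1 *: d /\ d2 = a2 *: d) ->
          m d1 d2 = 1)
    & (forall u v : V F, (m u v)^* * m v u = (-1) ^+ trb n (S u v))].

Definition Bplus (F : finFieldType) (S : V F -> V F -> F) (e1 e2 : V F) (u v : V F) : F :=
  S u e1 * S v e2.

Definition g0 (F : finFieldType) (n : nat) (S : V F -> V F -> F) (e1 e2 : V F)
    (u v : V F) : 'Z_4 :=
  ((2 * trb n (Bplus S e1 e2 u v))%N)%:R.

Definition gfun (F : finFieldType) (n : nat) (S : V F -> V F -> F) (e1 e2 : V F)
    (h : F -> 'Z_4) (u v : V F) : 'Z_4 :=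
  h (sqrtF (Bplus S e1 e2 (u + v) (u + v))) - h (sqrtF (Bplus S e1 e2 u u))
  - h (sqrtF (Bplus S e1 e2 v v)) + g0 n S e1 e2 u v.

Definition mWeyl (F : finFieldType) (n : nat) (S : V F -> V F -> F) (e1 e2 : V F)
    (h : F -> 'Z_4) (u v : V F) : algC :=
  'i ^+ (nat_of_ord (gfun n S e1 e2 h u v)).

(* Main.v *)
Require Import Defs.
From HB Require Import structures.
From mathcomp Require Import all_boot all_order all_algebra all_fingroup all_field.
From mathcomp Require Import ring.
Import GRing.Theory Num.Theory.
Local Open Scope ring_scope.
Set Implicit Arguments. Unset Strict Implicit.

Lemma sq_add2 (F : fieldType) (c2 : 2%:R = 0 :> F) (x y : F) :
  (x + y) ^+ 2 = x ^+ 2 + y ^+ 2.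
Proof. by rewrite sqrrD -mulr_natr c2 mulr0 addr0. Qed.

Lemma frobk (F : fieldType) (c2 : 2%:R = 0 :> F) (k : nat) (x y : F) :
  (x + y) ^+ (2 ^ k) = x ^+ (2 ^ k) + y ^+ (2 ^ k).
Proof.
elim: k x y => [|k IH] x y; first by rewrite !expr1.
by rewrite expnS !exprM sq_add2 // IH.
Qed.

Lemma sqr_sum (F : fieldType) (c2 : 2%:R = 0 :> F) (k : nat) (f : 'I_k -> F) :
  (\sum_(i < k) f i) ^+ 2 = \sum_(i < k) (f i) ^+ 2.
Proof.
apply: (big_morph (fun x : F => x ^+ 2)) => [x y|]; first exact: sq_add2.
by rewrite expr0n.
Qed.

Lemma trF_add (F : finFieldType) (c2 : 2%:R = 0 :> F) n (x y : F) :
  trF n (x + y) = trF n x + trF n y.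
Proof. by rewrite /trF -big_split; apply: eq_bigr => k _; rewrite frobk. Qed.

Lemma trF0 (F : finFieldType) n : trF n (0 : F) = 0.
Proof. by rewrite /trF big1 // => k _; rewrite expr0n expn_eq0. Qed.

Lemma trF_sum (F : finFieldType) (c2 : 2%:R = 0 :> F) n k (f : 'I_k -> F) :
  trF n (\sum_(i < k) f i) = \sum_(i < k) trF n (f i).
Proof.
apply: (big_morph (trF n)) => [x y|]; [exact: trF_add | exact: trF0].
Qed.

Lemma trF_scal (F : finFieldType) n (b : bool) (x : F) :
  trF n (b%:R * x) = b%:R * trF n x.
Proof. by case: b; rewrite ?mul1r ?mul0r ?trF0. Qed.

Lemma trF_idem (F : finFieldType) (c2 : 2%:R = 0 :> F) n (x : F)
  (hx : x ^+ (2 ^ n) = x) : trF n x ^+ 2 = trF n x.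
Proof.
rewrite /trF sqr_sum //.
under eq_bigr => k _ do rewrite -exprM -expnSr.
case: n hx => [|n] hx; first by rewrite !big_ord0.
rewrite big_ord_recr big_ord_recl /= expn0 expr1 hx addrC; congr (_ + _); by apply: eq_bigr.

Qed.

Lemma trF01 (F : finFieldType) (c2 : 2%:R = 0 :> F) n (x : F)
  (hx : x ^+ (2 ^ n) = x) : trF n x = 0 \/ trF n x = 1.
Proof.
have := trF_idem c2 hx; set t := trF n x => ht.
have : t * (t - 1) == 0 by rewrite mulrBr mulr1 -expr2 ht subrr.
by rewrite mulf_eq0 subr_eq0 => /orP[] /eqP; [left|right].
Qed.

Lemma trb_add (F : finFieldType) (c2 : 2%:R = 0 :> F) n
  (hx : forall x : F, x ^+ (2 ^ n) = x) (x y : F) :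
  trb n (x + y) = trb n x (+) trb n y.
Proof.
rewrite /trb trF_add //.
have o : (0 : F) == 1 = false by rewrite eq_sym oner_eq0.
have o2 : (1 : F) + 1 = 0 by rewrite -c2.
by case: (trF01 c2 (hx x)) => ->; case: (trF01 c2 (hx y)) => ->;
  rewrite ?addr0 ?add0r ?o2 ?eqxx ?o.
Qed.

Definition ztwo (k : nat) : 'Z_4 := ((2 * k)%N)%:R.

Lemma ztwo_xor a b : ztwo (a (+) b) = ztwo a + ztwo b.
Proof. by case: a; case: b; apply/eqP. Qed.

Lemma ztwo_opp (b : bool) : - ztwo b = ztwo b.
Proof. by case: b; apply/eqP. Qed.

Lemma ztwo_odd k : ztwo k = ztwo (odd k).
Proof.
rewrite /ztwo -{1}(odd_double_half k) mulnDr natrD -muln2 mulnCA mulnA.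
rewrite natrM -mulnA natrM (_ : (2 * 2)%N%:R = 0 :> 'Z_4); last by apply/eqP.
by rewrite mulr0 addr0.
Qed.

Definition ipow (x : 'Z_4) : algC := 'i ^+ (nat_of_ord x).

Lemma i4 : 'i ^+ 4 = 1 :> algC.
Proof. by rewrite (_ : 4 = 2 * 2)%N // exprM sqrCi sqrrN expr1n. Qed.

Lemma ipowD x y : ipow (x + y) = ipow x * ipow y.
Proof.
rewrite /ipow -exprD (_ : nat_of_ord (x + y) = ((x + y) %% 4)%N) //.
by rewrite {2}(divn_eq (x + y) 4) exprD mulnC exprM i4 expr1n mul1r.
Qed.

Lemma ipow0 : ipow 0 = 1. Proof. by []. Qed.

Lemma ipow_norm x : `|ipow x| = 1.
Proof. by rewrite /ipow normrX normCi expr1n. Qed.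

Lemma ipow_conj x : (ipow x)^* = ipow (- x).
Proof.
have h1 : ipow x * ipow (- x) = 1 by rewrite -ipowD subrr.
have h2 : (ipow x)^* * ipow x = 1 by rewrite -normCKC ipow_norm expr1n.
by rewrite -[LHS]mulr1 -h1 mulrA h2 mul1r.
Qed.

Lemma ipow_ztwo (b : bool) : ipow (ztwo b) = (-1) ^+ b.
Proof. by case: b; rewrite /ipow //= expr1 -sqrCi. Qed.


Lemma S0l (F : finFieldType) (S : 'cV[F]_2 -> 'cV[F]_2 -> F) (hS : symplectic_form S) w : S 0 w = 0.
Proof.
case: hS => Sl _ _ _; have := Sl 1 0 0 w.
rewrite scaler0 addr0 mul1r => h.
by have := congr1 (fun t => t - S 0 w) h; rewrite subrr addrK => h'; symmetry.
Qed.
Lemma S0r (F : finFieldType) (S : 'cV[F]_2 -> 'cV[F]_2 -> F) (hS : symplectic_form S) w : S w 0 = 0.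
Proof.
case: hS => _ Sr _ _; have := Sr 1 w 0 0.
rewrite scaler0 addr0 mul1r => h.
by have := congr1 (fun t => t - S w 0) h; rewrite subrr addrK => h'; symmetry.
Qed.
Lemma SDl (F : finFieldType) (S : 'cV[F]_2 -> 'cV[F]_2 -> F) (hS : symplectic_form S) u v w : S (u + v) w = S u w + S v w.
Proof. by case: hS => Sl _ _ _; have := Sl 1 u v w; rewrite scale1r mul1r. Qed.
Lemma SDr (F : finFieldType) (S : 'cV[F]_2 -> 'cV[F]_2 -> F) (hS : symplectic_form S) u v w : S w (u + v) = S w u + S w v.
Proof. by case: hS => _ Sr _ _; have := Sr 1 w u v; rewrite scale1r mul1r. Qed.
Lemma SZl (F : finFieldType) (S : 'cV[F]_2 -> 'cV[F]_2 -> F) (hS : symplectic_form S) a u w : S (a *: u) w = a * S u w.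
Proof. by have [Sl _ _ _] := hS; rewrite -[a *: u]addr0 Sl (S0l hS) addr0. Qed.
Lemma SZr (F : finFieldType) (S : 'cV[F]_2 -> 'cV[F]_2 -> F) (hS : symplectic_form S) a u w : S w (a *: u) = a * S w u.
Proof. by have [_ Sr _ _] := hS; rewrite -[a *: u]addr0 Sr (S0r hS) addr0. Qed.
Lemma Saa (F : finFieldType) (S : 'cV[F]_2 -> 'cV[F]_2 -> F) (hS : symplectic_form S) u : S u u = 0.
Proof. by case: hS. Qed.
Lemma Santi (F : finFieldType) (S : 'cV[F]_2 -> 'cV[F]_2 -> F) (hS : symplectic_form S) u v : S u v = - S v u.
Proof.
have := Saa hS (u + v); rewrite (SDl hS) !(SDr hS) !(Saa hS) add0r addr0 => /eqP.
by rewrite addr_eq0 => /eqP.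
Qed.

Lemma span2 (F : fieldType) (e1 e2 : 'cV[F]_2) (hb : row_free (col_mx e1^T e2^T))
  (u : 'cV[F]_2) : exists a1 a2, u = a1 *: e1 + a2 *: e2.
Proof.
have hf : row_full (col_mx e1^T e2^T) by exact: hb.
have /submxP [D hD] := submx_full u^T hf.
move: hD; rewrite -(hsubmxK D) mul_row_col.
rewrite [lsubmx D]mx11_scalar [rsubmx D]mx11_scalar !mul_scalar_mx => hD.
exists (lsubmx D 0 0), (rsubmx D 0 0).
by apply: trmx_inj; rewrite hD linearD !linearZ.
Qed.

Lemma natF_odd (F : fieldType) (c2 : 2%:R = 0 :> F) k : (k%:R : F) = (odd k)%:R.
Proof.
by rewrite -{1}(odd_double_half k) natrD -muln2 natrM c2 mulr0 addr0.
Qed.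

Lemma hquad (n : nat) (F : finFieldType) (hF : #|F| = (2 ^ n)%N)
    (c2 : 2%:R = 0 :> F)
    (omega : 'I_n -> F)
    (homega : forall i j : 'I_n, trF n (omega i * omega j) = (i == j)%:R)
    (r : 'I_n -> 'Z_4) (hr : forall i, r i = 1 \/ r i = -1)
    (h : F -> 'Z_4)
    (hh : forall z : 'I_n -> bool,
        h (\sum_(i < n) (z i)%:R * omega i) = \sum_(i < n) r i * (z i)%:R)
    (x y : F) : h (x + y) = h x + h y + ztwo (trb n (x * y)).
Proof.
pose phi (z : {ffun 'I_n -> bool}) := \sum_(i < n) (z i)%:R * omega i.
have coef z j : trF n (phi z * omega j) = (z j)%:R.
  rewrite /phi mulr_suml trF_sum //.
  under eq_bigr => i _ do rewrite -mulrA trF_scal homega.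
  rewrite (bigD1 j) //= eqxx mulr1 big1 ?addr0 // => i /negbTE ->.
  by rewrite mulr0.
have inj : injective phi.
  move=> z1 z2 e; apply/ffunP => j; have := coef z1 j; rewrite e coef.
  by case: (z1 j); case: (z2 j) => // /eqP; rewrite ?oner_eq0 // eq_sym oner_eq0.
have surj t : exists z, t = phi z.
  have hc : (#|F| <= #|{ffun 'I_n -> bool}|)%N by rewrite card_ffun card_bool card_ord hF.
  by have /codomP [z ->] := inj_card_onto inj hc t; exists z.
have [z ->] := surj x; have [w ->] := surj y.
pose zw := [ffun i => z i (+) w i].
have -> : phi z + phi w = phi zw.
  rewrite /phi -big_split; apply: eq_bigr => i _; rewrite ffunE.
  case: (z i); case: (w i); rewrite /= ?mul1r ?mul0r ?add0r ?addr0 //.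
  by rewrite -mulr2n -mulr_natl c2 mul0r.
have tr : trF n (phi z * phi w) = (\sum_(i < n) (z i * w i)%N)%:R.
  rewrite natr_sum {2}/phi mulr_sumr trF_sum //; apply: eq_bigr => j _.
  by rewrite mulrCA trF_scal coef natrM mulrC.
have -> : trb n (phi z * phi w) = odd (\sum_(i < n) (z i * w i)%N).
  rewrite /trb tr natF_odd //; case: (odd _); rewrite ?eqxx //.
  by rewrite eq_sym oner_eq0.
rewrite -ztwo_odd !hh /ztwo natrM natr_sum mulr_sumr -!big_split /=.
apply: eq_bigr => i _; rewrite ffunE.
by case: (hr i) => ->; case: (z i); case: (w i); apply/eqP.
Qed.

Lemma coc (a b c d e f x1 x2 x3 : 'Z_4) :
  a - b - c + (x1 + x2) + (b - d - e + x3) = a - d - f + (x3 + x1) + (f - e - c + x2).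
Proof. ring. Qed.

Unset Implicit Arguments.

Theorem mainTheorem7 (n : nat) (F : finFieldType) (hF : #|F| = (2 ^ n)%N)
    (omega : 'I_n -> F)
    (homega : forall i j : 'I_n, trF n (omega i * omega j) = (i == j)%:R)
    (r : 'I_n -> 'Z_4) (hr : forall i, r i = 1 \/ r i = -1)
    (h : F -> 'Z_4)
    (hh : forall z : 'I_n -> bool,
        h (\sum_(i < n) (z i)%:R * omega i) = \sum_(i < n) r i * (z i)%:R)
    (S : 'cV[F]_2 -> 'cV[F]_2 -> F) (hS : symplectic_form S)
    (A : {'GL_2[F]}) (hdet : \det (GLval A) = 1) (hord : #[A]%g = #|F|.-1)
    (xi : F) (hxi : xi != xi^-1)
    (e1 e2 : 'cV[F]_2) (hbasis : row_free (col_mx e1^T e2^T)) (hS12 : S e1 e2 = 1)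
    (hA1 : GLval A *m e1 = xi *: e1) (hA2 : GLval A *m e2 = xi^-1 *: e2) :
  let m := mWeyl n S e1 e2 h in
  [/\ weyl_multiplier n S m,
      (forall B : {'GL_2[F]}, B \in <[A]>%g ->
          forall u v : 'cV[F]_2, m (GLval B *m u) (GLval B *m v) = m u v)
    & (forall a1 a2 : F, m (a1 *: e1) (a2 *: e2) = 'i ^+ (nat_of_ord (h (sqrtF (a1 * a2)))))].
Proof.
move=> m.
have c2 : 2%:R = 0 :> F.
  by have /andP [_ /eqP] := card_finPcharP hF (isT : prime 2).
have oppF (x : F) : - x = x.
  by apply/eqP; rewrite eq_sym -subr_eq0 opprK -mulr2n -mulr_natr c2 mulr0.
have n0 : (0 < n)%N.
  by have := card_finNzRing_gt1 F; rewrite hF; case: (n).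
set n' := n.-1; have en : n = n'.+1 by rewrite prednK.
have hx (x : F) : x ^+ (2 ^ n) = x by rewrite -hF expf_card.
have sqE (x : F) : sqrtF x = x ^+ (2 ^ n').
  by rewrite /sqrtF hF en expnS mulKn.
have sqM (x y : F) : sqrtF (x * y) = sqrtF x * sqrtF y by rewrite !sqE exprMn.
have sqsq (x : F) : sqrtF (x * x) = x by rewrite sqE -expr2 -exprM -expnS -en hx.
have sq2 (x : F) : sqrtF x * sqrtF x = x by rewrite sqE -expr2 -exprM mulnC -expnS -en hx.
have sqA (a x : F) : sqrtF (a * a * x) = a * sqrtF x by rewrite sqM sqsq.
have hq := hquad hF c2 homega hr hh.
have trb0 : trb n (0 : F) = false by rewrite /trb trF0 eq_sym oner_eq0.
have h0 : h 0 = 0.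
  have := hq 0 0; rewrite addr0 mulr0 trb0 => /eqP.
  rewrite (_ : ztwo false = 0) ?addr0; last by apply/eqP.
  move=> /eqP e; have := congr1 (fun t => t - h 0) e; rewrite subrr addrK => e'.
  by rewrite -e'.
have xi0 : xi != 0 by apply: contraNneq hxi => ->; rewrite invr0.
have dec v : v = S v e2 *: e1 + S e1 v *: e2.
  have [a1 [a2 ->]] := span2 hbasis v.
  rewrite (SDl hS) (SDr hS) !(SZl hS) !(SZr hS) !(Saa hS) hS12.
  by rewrite !mulr0 !mulr1 addr0 add0r.
have BDl u v w : Bplus S e1 e2 (u + v) w = Bplus S e1 e2 u w + Bplus S e1 e2 v w.
  by rewrite /Bplus (SDl hS) mulrDl.
have BDr u v w : Bplus S e1 e2 u (v + w) = Bplus S e1 e2 u v + Bplus S e1 e2 u w.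
  by rewrite /Bplus (SDl hS) mulrDr.
have BZ a b u v : Bplus S e1 e2 (a *: u) (b *: v) = a * b * Bplus S e1 e2 u v.
  by rewrite /Bplus !(SZl hS); ring.
have g0E u v : g0 n S e1 e2 u v = ztwo (trb n (Bplus S e1 e2 u v)) by [].
have trbD := trb_add c2 hx.
have g0Dl u v w : g0 n S e1 e2 (u + v) w = g0 n S e1 e2 u w + g0 n S e1 e2 v w.
  by rewrite !g0E BDl trbD ztwo_xor.
have g0Dr u v w : g0 n S e1 e2 u (v + w) = g0 n S e1 e2 u v + g0 n S e1 e2 u w.
  by rewrite !g0E BDr trbD ztwo_xor.
have mE u v : m u v = ipow (gfun n S e1 e2 h u v) by [].
have zdbl (b : bool) : ztwo b + ztwo b = 0 by case: b; apply/eqP.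
have Ae1 w : S (GLval A *m w) e1 = xi^-1 * S w e1.
  rewrite [w in RHS]dec [w in LHS]dec mulmxDr -!scalemxAr hA1 hA2 !scalerA.
  rewrite !(SDl hS) !(SZl hS) !(Saa hS); ring.
have Ae2 w : S (GLval A *m w) e2 = xi * S w e2.
  rewrite [w in RHS]dec [w in LHS]dec mulmxDr -!scalemxAr hA1 hA2 !scalerA.
  rewrite !(SDl hS) !(SZl hS) !(Saa hS); ring.
have BQ k u v : Bplus S e1 e2 (GLval (A ^+ k)%g *m u) (GLval (A ^+ k)%g *m v)
    = Bplus S e1 e2 u v.
  elim: k u v => [|k IH] u v; first by rewrite expg0 GL_1E !mul1mx.
  rewrite expgS GL_MxE -!mulmxA -[RHS]IH /Bplus Ae1 Ae2.
  by rewrite mulrACA mulVf // mul1r.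
split.
- split.
  + by move=> u v; rewrite mE ipow_norm.
  + move=> u v w; rewrite !mE -!ipowD /gfun g0Dl g0Dr [u + (v + w)]addrA; congr ipow.
    exact: coc.
  + move=> d1 d2 [d [_ [a1 [a2 [-> ->]]]]].
    rewrite mE /gfun -scalerDl !BZ g0E BZ.
    set c := Bplus S e1 e2 d d.
    rewrite !sqA mulrDl hq.
    have -> : a1 * sqrtF c * (a2 * sqrtF c) = a1 * a2 * c.
      by rewrite mulrACA sq2.
    have -> : forall X Y Z : 'Z_4, X + Y + Z - X - Y + Z = Z + Z by move=> *; ring.
    by rewrite zdbl ipow0.
  + move=> u v; rewrite !mE ipow_conj -ipowD.
    have e : S u v = Bplus S e1 e2 v u + Bplus S e1 e2 u v.
      rewrite [v in LHS]dec (SDr hS) !(SZr hS) (Santi hS e1) oppF /Bplus; ring.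
    rewrite e trbD -ipow_ztwo ztwo_xor -!g0E /gfun [v + u]addrC; congr ipow.
    have -> : forall X Y Z P Q : 'Z_4, -(Z - Y - X + P) + (Z - X - Y + Q) = Q + - P
      by move=> *; ring.
    by rewrite g0E ztwo_opp.
- move=> B /cycleP [k ->] u v; rewrite !mE /gfun /g0 -mulmxDr !BQ //.
- move=> a1 a2; rewrite mE /gfun g0E.
  rewrite /Bplus !(SDl hS) !(SZl hS) !(Saa hS) (Santi hS e2 e1) hS12 oppF.
  rewrite !mulr0 !mul0r !add0r !addr0 mulr1 trb0 mulrC.
  have -> : sqrtF (0 : F) = 0 by rewrite sqE expr0n expn_eq0.
  rewrite h0 !subr0 (_ : ztwo false = 0) ?addr0 ?mulr1 //; by apply/eqP.
Qed.
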